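(* Let $A$ be an AUF algebra and let $e\in A$ be a generating idempotent. Then the map $A\to\mathrm{End}^0_{-,eAe}(Ae)$ sending each $a\in A$ to the operator of left multiplication by $a$ on $Ae$ is a linear isomorphism.
   Context: All algebras are associative $\mathbb C$-algebras, not necessarily unital. An idempotent is $e$ with $e^2=e$. An algebra $A$ is AUF if there is a family $(e_i)_{i\in\mathfrak I}$ of mutually orthogonal idempotents with $\dim e_iAe_j<\infty$ and $A=\sum_{i,j}e_iAe_j$. A left $A$-module $M$ is quasicoherent if $\xi\in A\xi$ for all $\xi\in M$. Irreducible means nonzero with no nonzero proper submodules. An idempotent $e$ is generating if every irreducible quasicoherent left $A$-module is a quotient of $Ae$. For a quasicoherent left $A$-module $M$: $M^\vee$ is the space of linear functionals $\varphi$ on $M$ for which there is an idempotent $f\in A$ with $\varphi(f\eta)=\varphi(\eta)$ for all $\eta$; $\mathrm{End}^0(M)$ is the span in $\mathrm{End}(M)$ of the operators $\eta\mapsto\varphi(\eta)\xi$ with $\xi\in M$, $\varphi\in M^\vee$; if $M$ carries a right action of an algebra $C$ commuting with $A$, $\mathrm{End}^0_{-,C}(M)=\{T\in\mathrm{End}^0(M):T(\xi c)=T(\xi)c\ \forall\xi,c\}$. Here $Ae$ carries the right action of $eAe$ by multiplication. *)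

(* Defs.v *)
From mathcomp Require Import all_boot all_algebra.
From mathcomp Require Export complex reals.
Set Implicit Arguments. Unset Strict Implicit. Unset Printing Implicit Defensive.
Import GRing.Theory.
Local Open Scope ring_scope.

Section NuAlg.
Variable K : fieldType.

Definition is_nualg (A : lmodType K) (mul : A -> A -> A) : Prop :=
  [/\ forall a b c, mul a (mul b c) = mul (mul a b) c,
      forall (k : K) a b c, mul (k *: a + b) c = k *: mul a c + mul b c
    & forall (k : K) a b c, mul a (k *: b + c) = k *: mul a b + mul a c].

Definition fin_dim (V : lmodType K) (P : V -> Prop) : Prop :=
  exists s : seq V, forall x, P x ->
    exists c : 'I_(size s) -> K, x = \sum_(i < size s) c i *: s`_i.

Variables (A : lmodType K) (mul : A -> A -> A).

Definition idempotent (e : A) : Prop := mul e e = e.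

Definition AUF : Prop :=
  exists (I : Type) (E : I -> A),
    [/\ forall i, idempotent (E i),
        forall i j, i <> j -> mul (E i) (E j) = 0,
        forall i j, fin_dim (fun x : A => exists a, x = mul (mul (E i) a) (E j))
      & forall a : A, exists s : seq (I * I * A),
          a = \sum_(t <- s) mul (mul (E t.1.1) t.2) (E t.1.2)].

Definition is_module (M : lmodType K) (act : A -> M -> M) : Prop :=
  [/\ forall a b m, act (mul a b) m = act a (act b m),
      forall (k : K) a b m, act (k *: a + b) m = k *: act a m + act b m
    & forall (k : K) a m n, act a (k *: m + n) = k *: act a m + act a n].

Definition quasicoherent (M : lmodType K) (act : A -> M -> M) : Prop :=
  forall xi : M, exists a : A, act a xi = xi.

Definition is_submodule (M : lmodType K) (act : A -> M -> M) (P : M -> Prop) :=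
  [/\ P 0, forall (k : K) m n, P m -> P n -> P (k *: m + n)
    & forall a m, P m -> P (act a m)].

Definition irreducible (M : lmodType K) (act : A -> M -> M) : Prop :=
  (exists m : M, m <> 0) /\
  forall P : M -> Prop, is_submodule act P ->
    (forall m, P m -> m = 0) \/ (forall m, P m).

Definition in_Ae (e x : A) : Prop := exists a : A, x = mul a e.

(* M is a quotient of the left A-module Ae: there is a surjective
   A-module map Ae -> M (represented by a function on A, only its
   restriction to Ae matters) *)
Definition quotient_of_Ae (e : A) (M : lmodType K) (act : A -> M -> M) : Prop :=
  exists f : A -> M,
    [/\ forall (k : K) x y, in_Ae e x -> in_Ae e y -> f (k *: x + y) = k *: f x + f y,
        forall a x, in_Ae e x -> f (mul a x) = act a (f x)
      & forall m : M, exists2 x, in_Ae e x & f x = m].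

Definition generating (e : A) : Prop :=
  idempotent e /\
  forall (M : lmodType K) (act : A -> M -> M),
    is_module act -> quasicoherent act -> irreducible act -> quotient_of_Ae e act.

Definition in_dual_Ae (e : A) (phi : A -> K) : Prop :=
  (forall (k : K) x y, in_Ae e x -> in_Ae e y -> phi (k *: x + y) = k * phi x + phi y) /\
  exists f : A, idempotent f /\ forall eta, in_Ae e eta -> phi (mul f eta) = phi eta.

(* End^0(Ae): operators on Ae (functions A -> A restricted to Ae) in the span
   of the rank-one operators eta |-> phi(eta) xi, xi in Ae, phi in (Ae)^vee *)
Definition in_End0_Ae (e : A) (T : A -> A) : Prop :=
  exists (n : nat) (phi : 'I_n -> A -> K) (xi : 'I_n -> A),
    [/\ forall k, in_dual_Ae e (phi k),
        forall k, in_Ae e (xi k)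
      & forall eta, in_Ae e eta -> T eta = \sum_(k < n) phi k eta *: xi k].

Definition in_End0_right_Ae (e : A) (T : A -> A) : Prop :=
  in_End0_Ae e T /\
  forall xi c, in_Ae e xi -> (exists b, c = mul (mul e b) e) ->
    T (mul xi c) = mul (T xi) c.

End NuAlg.

(* Main.v *)
Require Import Defs.
From mathcomp Require Import all_boot all_algebra complex reals.
From HB Require Import structures.
From mathcomp Require Import zify.
From mathcomp Require boolp.
From Stdlib Require Import Classical ClassicalEpsilon ProofIrrelevance FunctionalExtensionality.
Set Implicit Arguments. Unset Strict Implicit. Unset Printing Implicit Defensive.
Import GRing.Theory.
Local Open Scope ring_scope.

Section Basics.
Variables (K : fieldType) (A : lmodType K) (mul : A -> A -> A).
Hypothesis Hnu : is_nualg mul.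

Lemma mA a b c : mul a (mul b c) = mul (mul a b) c.
Proof. by case: Hnu. Qed.
Lemma mDZl k a b c : mul (k *: a + b) c = k *: mul a c + mul b c.
Proof. by case: Hnu. Qed.
Lemma mDZr k a b c : mul a (k *: b + c) = k *: mul a b + mul a c.
Proof. by case: Hnu. Qed.
Lemma m0l c : mul 0 c = 0.
Proof.
have := mDZl 1 0 0 c; rewrite !scale1r addr0 => H.
by apply: (addrI (mul 0 c)); rewrite addr0 -H.
Qed.
Lemma m0r c : mul c 0 = 0.
Proof.
have := mDZr 1 c 0 0; rewrite !scale1r addr0 => H.
by apply: (addrI (mul c 0)); rewrite addr0 -H.
Qed.
Lemma mDl a b c : mul (a + b) c = mul a c + mul b c.
Proof. by rewrite -[a]scale1r mDZl !scale1r. Qed.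
Lemma mDr a b c : mul a (b + c) = mul a b + mul a c.
Proof. by rewrite -[b]scale1r mDZr !scale1r. Qed.
Lemma mZl k a c : mul (k *: a) c = k *: mul a c.
Proof. by rewrite -[k *: a]addr0 mDZl m0l addr0. Qed.
Lemma mZr k a c : mul a (k *: c) = k *: mul a c.
Proof. by rewrite -[k *: c]addr0 mDZr m0r addr0. Qed.
Lemma mNl a c : mul (- a) c = - mul a c.
Proof. by rewrite -scaleN1r mZl scaleN1r. Qed.
Lemma mNr a c : mul a (- c) = - mul a c.
Proof. by rewrite -scaleN1r mZr scaleN1r. Qed.
Lemma mBl a b c : mul (a - b) c = mul a c - mul b c.
Proof. by rewrite mDl mNl. Qed.
Lemma mBr a b c : mul a (b - c) = mul a b - mul a c.
Proof. by rewrite mDr mNr. Qed.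
Lemma m_suml (I : Type) (r : seq I) (P : pred I) (F : I -> A) c :
  mul (\sum_(i <- r | P i) F i) c = \sum_(i <- r | P i) mul (F i) c.
Proof. exact: (big_morph (fun x => mul x c) (fun x y => mDl x y c) (m0l c)). Qed.
Lemma m_sumr (I : Type) (r : seq I) (P : pred I) (F : I -> A) c :
  mul c (\sum_(i <- r | P i) F i) = \sum_(i <- r | P i) mul c (F i).
Proof. exact: (big_morph (fun x => mul c x) (fun x y => mDr c x y) (m0r c)). Qed.

Section Units.
Variables (I : Type) (E : I -> A).
Hypothesis Eid : forall i, mul (E i) (E i) = E i.
Hypothesis Eorth : forall i j, i <> j -> mul (E i) (E j) = 0.

Lemma units_js (js : seq I) : exists L : seq I,
  (forall j, List.In j js -> mul (E j) (\sum_(l <- L) E l) = E j /\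
                             mul (\sum_(l <- L) E l) (E j) = E j) /\
  (forall l, (mul (E l) (\sum_(l <- L) E l) = E l /\ mul (\sum_(l <- L) E l) (E l) = E l)
           \/ (mul (E l) (\sum_(l <- L) E l) = 0 /\ mul (\sum_(l <- L) E l) (E l) = 0)).
Proof.
elim: js => [|j js [L [H1 H2]]].
  by exists [::]; split => // l; right; rewrite big_nil m0l m0r.
case: (H2 j) => [[h1 h2]|[h1 h2]].
  by exists L; split => // j' [<-|/H1].
exists (j :: L); rewrite big_cons.
have key : forall l, l <> j ->
   mul (E l) (E j + \sum_(l0 <- L) E l0) = mul (E l) (\sum_(l0 <- L) E l0) /\
   mul (E j + \sum_(l0 <- L) E l0) (E l) = mul (\sum_(l0 <- L) E l0) (E l).
  move=> l ne; rewrite mDr mDl (Eorth ne) (Eorth (fun h => ne (esym h))).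
  by rewrite !add0r.
have hj : mul (E j) (E j + \sum_(l0 <- L) E l0) = E j /\
          mul (E j + \sum_(l0 <- L) E l0) (E j) = E j.
  by rewrite mDr mDl h1 h2 Eid !addr0.
split.
  move=> j' [<-|/H1 [g1 g2]] //.
  case: (classic (j' = j)) => [->|ne] //.
  by case: (key _ ne) => -> ->.
move=> l; case: (classic (l = j)) => [->|ne]; first by left.
by case: (key _ ne) => -> ->; apply: H2.
Qed.

Lemma big_In (T : Type) (l : seq T) (f g : T -> A) :
  (forall t, List.In t l -> f t = g t) -> \sum_(t <- l) f t = \sum_(t <- l) g t.
Proof.
elim: l => [|t l IH] H; first by rewrite !big_nil.
by rewrite !big_cons H /=; [rewrite IH // => t' h; apply: H; right | left].
Qed.
Lemma In_map (T U : Type) (f : T -> U) (l : seq T) t : List.In t l -> List.In (f t) (map f l).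
Proof. by elim: l => [|x l IH] //= [->|h]; [left | right; apply: IH]. Qed.
Lemma In_cat (T : Type) (l l' : seq T) t : List.In t l \/ List.In t l' -> List.In t (l ++ l').
Proof. by elim: l => [|x l IH] /= [[]|h] //; [left | right; apply: IH; left | right; apply: IH; right]. Qed.

Hypothesis Edec : forall a : A, exists s : seq (I * I * A),
  a = \sum_(t <- s) mul (mul (E t.1.1) t.2) (E t.1.2).

Lemma local_js (xs : seq A) : exists js : seq I, forall x, List.In x xs -> forall F : A,
  (forall j, List.In j js -> mul (E j) F = E j /\ mul F (E j) = E j) ->
  mul F x = x /\ mul x F = x.
Proof.
elim: xs => [|x xs [js H]]; first by exists [::].
have [s es] := Edec x.
exists ([seq t.1.1 | t <- s] ++ [seq t.1.2 | t <- s] ++ js) => y [<-|hy] F HF; last first.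
  by apply: H => // j hj; apply: HF; apply: In_cat; right; apply: In_cat; right.
rewrite es m_sumr m_suml; split; apply: big_In => t ht.
  have [_ h] := HF t.1.1 (In_cat (or_introl (In_map (fun t => t.1.1) ht))).
  by rewrite !mA h.
have [h _] := HF t.1.2 (In_cat (or_intror (In_cat (or_introl (In_map (fun t => t.1.2) ht))))).
by rewrite -!mA h.
Qed.

Lemma local_units (xs : seq A) : exists L : seq I, forall x, List.In x xs ->
  mul (\sum_(l <- L) E l) x = x /\ mul x (\sum_(l <- L) E l) = x.
Proof.
have [js H] := local_js xs.
have [L [H1 _]] := units_js js.
by exists L => x hx; apply: H.
Qed.
End Units.
End Basics.


Section FinLin.
Variables (K : fieldType) (A : lmodType K) (s : seq A).
Local Notation N := (size s).
Definition sg (r : 'rV[K]_N) : A := \sum_(i < N) r 0 i *: s`_i.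
Definition spanP (y : A) := exists r, y = sg r.

Lemma sgDZ k r r' : sg (k *: r + r') = k *: sg r + sg r'.
Proof.
rewrite /sg scaler_sumr -big_split; apply: eq_bigr => i _.
by rewrite !mxE scalerDl scalerA.
Qed.
Lemma sg0 : sg 0 = 0.
Proof. by rewrite /sg big1 // => i _; rewrite mxE scale0r. Qed.
Lemma sgD r r' : sg (r + r') = sg r + sg r'.
Proof. by rewrite -[r]scale1r sgDZ !scale1r. Qed.
Lemma sgZ k r : sg (k *: r) = k *: sg r.
Proof. by rewrite -[k *: r]addr0 sgDZ sg0 addr0. Qed.
Lemma sgB r r' : sg (r - r') = sg r - sg r'.
Proof. by rewrite -[- r']scaleN1r addrC sgDZ scaleN1r addrC. Qed.
Lemma sg_sum (I : Type) (l : seq I) (P : pred I) (F : I -> 'rV_N) :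
  sg (\sum_(i <- l | P i) F i) = \sum_(i <- l | P i) sg (F i).
Proof. exact: (big_morph sg sgD sg0). Qed.

Definition pre (y : A) : 'rV[K]_N := epsilon (inhabits 0) (fun r => y = sg r).
Lemma preP y : spanP y -> y = sg (pre y).
Proof. by move=> H; rewrite /pre; apply: (epsilon_spec (inhabits 0) (fun r => y = sg r)). Qed.

Lemma maxrank (P : 'M[K]_N -> Prop) X : P X ->
  exists X0, P X0 /\ forall Y, P Y -> ~ (\rank X0 < \rank Y)%N.
Proof.
move=> PX.
suff : forall m X, P X -> (N - \rank X <= m)%N ->
  exists X0, P X0 /\ forall Y, P Y -> ~ (\rank X0 < \rank Y)%N.
  by move/(_ N X PX); apply; rewrite leq_subr.
elim=> [|m IH] X1 PX1 hm.
  exists X1; split => // Y PY lt.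
  have := rank_leq_col Y; lia.
case: (classic (exists Y, P Y /\ (\rank X1 < \rank Y)%N)) => [[Y [PY lt]]|nY].
  apply: (IH Y PY); have := rank_leq_col Y; lia.
by exists X1; split => // Y PY lt; apply: nY; exists Y.
Qed.

Lemma subspace_repr (Q : 'rV[K]_N -> Prop) : Q 0 ->
  (forall k r r', Q r -> Q r' -> Q (k *: r + r')) ->
  exists X : 'M[K]_N, forall r, Q r <-> (r <= X)%MS.
Proof.
move=> Q0 QC.
have g00 : forall r, (r <= (0 : 'M[K]_N))%MS -> Q r.
  by move=> r; rewrite submx0 => /eqP ->.
have [X0 [g0 mx]] := @maxrank (fun X => forall r, (r <= X)%MS -> Q r) 0 g00.
exists X0 => r; split; last exact: g0.
move=> Qr; apply/negPn/negP => nr.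
apply: (mx (X0 + r)%MS).
  move=> r' /sub_addsmxP [[u1 u2] /= ->].
  rewrite [u2]mx11_scalar mul_scalar_mx addrC.
  apply: QC => //; apply: g0; exact: submxMl.
apply: rank_ltmx; rewrite ltmxE addsmxSl /=.
apply/negP => h; move/negP: nr; apply; exact: submx_trans (addsmxSr _ _) h.
Qed.

Lemma coords : exists (n : nat) (phi : 'I_n -> A -> K) (zeta : 'I_n -> A),
  (forall j c y y', spanP y -> spanP y' -> phi j (c *: y + y') = c * phi j y + phi j y') /\
  (forall y, spanP y -> y = \sum_(j < n) phi j y *: zeta j).
Proof.
have hc : forall k r r', sg r = 0 -> sg r' = 0 -> sg (k *: r + r') = 0.
  by move=> k r r' h h'; rewrite sgDZ h h' scaler0 addr0.
have [X HX] := @subspace_repr (fun r => sg r = 0) sg0 hc.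
pose C := cokermx X.
have kerC r : sg r = 0 <-> r *m C = 0.
  by rewrite HX submxE; split => [/eqP|->].
exists N, (fun j y => (pre y *m C) 0 j), (fun j => sg (row j (pinvmx C))).
split.
  move=> j c y y' sy sy'.
  have : sg (pre (c *: y + y') - (c *: pre y + pre y')) = 0.
    rewrite sgB sgDZ -!preP //; first by rewrite subrr.
    by case: sy => r ->; case: sy' => r' ->; exists (c *: r + r'); rewrite sgDZ.
  move/kerC/eqP; rewrite mulmxBl subr_eq0 => /eqP ->.
  by rewrite mulmxDl -scalemxAl !mxE.
move=> y sy.
have -> : \sum_(j < N) (pre y *m C) 0 j *: sg (row j (pinvmx C)) =
          sg (pre y *m C *m pinvmx C).
  by rewrite (mulmx_sum_row (pre y *m C)) sg_sum; apply: eq_bigr => j _; rewrite sgZ.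
rewrite {1}(preP sy); apply/eqP; rewrite -subr_eq0 -sgB; apply/eqP/kerC.
by rewrite mulmxBl mulmxKpV ?subrr // submxMl.
Qed.
End FinLin.


Section JV.
Variables (K : fieldType) (A : lmodType K) (mul : A -> A -> A).
Hypothesis Hnu : is_nualg mul.
Variables (E e : A).
Definition Vp y := exists a, y = mul (mul E a) E.
Definition Jsp y := exists ps : seq (A * A), y = \sum_(p <- ps) mul (mul p.1 e) p.2.
Local Notation mA := (mA Hnu).

Lemma V0 : Vp 0.
Proof. by exists 0; rewrite (m0r Hnu) (m0l Hnu). Qed.
Lemma VDZ k y y' : Vp y -> Vp y' -> Vp (k *: y + y').
Proof.
by move=> [a ->] [b ->]; exists (k *: a + b); rewrite (mDZr Hnu) (mDZl Hnu).
Qed.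
Lemma VM u y : Vp u -> Vp y -> Vp (mul u y).
Proof. by move=> [a ->] [b ->]; exists (mul (mul (mul a E) E) b); rewrite !mA. Qed.
Hypothesis EE : mul E E = E.
Lemma VE : Vp E.
Proof. by exists E; rewrite !EE. Qed.
Lemma VlE u : Vp u -> mul E u = u.
Proof. by move=> [a ->]; rewrite !mA EE. Qed.
Lemma VrE u : Vp u -> mul u E = u.
Proof. by move=> [a ->]; rewrite -!mA EE. Qed.

Lemma J0 : Jsp 0.
Proof. by exists [::]; rewrite big_nil. Qed.
Lemma JDZ k y y' : Jsp y -> Jsp y' -> Jsp (k *: y + y').
Proof.
move=> [ps ->] [qs ->]; exists ([seq (k *: p.1, p.2) | p <- ps] ++ qs).
rewrite big_cat big_map scaler_sumr /=; congr (_ + _); apply: eq_bigr => p _.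
by rewrite !(mZl Hnu).
Qed.
Lemma Jl u y : Jsp y -> Jsp (mul u y).
Proof.
move=> [ps ->]; exists [seq (mul u p.1, p.2) | p <- ps].
by rewrite big_map (m_sumr Hnu); apply: eq_bigr => p _; rewrite !mA.
Qed.
Lemma Jprod u v : Jsp (mul (mul u e) v).
Proof. by exists [:: (u, v)]; rewrite big_cons big_nil addr0. Qed.
End JV.

Section Lam.
Variables (K : fieldType) (A : lmodType K) (mul : A -> A -> A).
Hypothesis Hnu : is_nualg mul.
Variables (E e : A) (s : seq A).
Hypothesis EE : mul E E = E.
Hypothesis HV : forall y, Vp mul E y -> spanP s y.
Hypothesis HE : ~ Jsp mul e E.
Local Notation Vp := (Vp mul E).
Local Notation Jsp := (Jsp mul e).
Local Notation N := (size s).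
Local Notation sg := (@sg _ _ s).

Definition cand (X : 'M[K]_N) : Prop :=
  [/\ (forall r, (r <= X)%MS -> Vp (sg r)),
      (forall r, Vp (sg r) -> Jsp (sg r) -> (r <= X)%MS),
      (forall r, (r <= X)%MS -> sg r <> E)
    & (forall r, (r <= X)%MS -> forall u, Vp u -> exists2 r', (r' <= X)%MS & sg r' = mul u (sg r))].

Lemma lam_exists : exists lam : A -> K,
 [/\ (forall k y y', Vp y -> Vp y' -> lam (k *: y + y') = k * lam y + lam y'),
     lam E = 1,
     (forall y, Vp y -> Jsp y -> lam y = 0)
   & (forall w, Vp w -> lam w <> 0 ->
        exists v, Vp v /\ forall u, Vp u -> lam (mul (mul u v) w) = lam u)].
Proof.
have Q0 : Vp (sg 0) /\ Jsp (sg 0) by rewrite sg0; split; [apply: (V0 Hnu) | apply: J0].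
have QC : forall k r r', Vp (sg r) /\ Jsp (sg r) -> Vp (sg r') /\ Jsp (sg r') ->
    Vp (sg (k *: r + r')) /\ Jsp (sg (k *: r + r')).
  by move=> k r r' [? ?] [? ?]; rewrite sgDZ; split; [apply: (VDZ Hnu) | apply: (JDZ Hnu)].
have [XJ HXJ] := subspace_repr Q0 QC.
have cJ : cand XJ.
  split.
  - by move=> r /HXJ [].
  - by move=> r ? ?; apply/HXJ.
  - by move=> r /HXJ [_ h] eq; apply: HE; rewrite -eq.
  move=> r /HXJ [h1 h2] u Vu.
  have [r' er'] := HV (VM Hnu Vu h1).
  exists r' => //; apply/HXJ; rewrite -er'; split; [exact: (VM Hnu) | exact: (Jl Hnu)].
have [X0 [[ca cb cc cd] mx]] := maxrank cJ.
pose C := cokermx X0.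
have [rE erE] := HV (VE EE).
have nE : ~~ (rE <= X0)%MS by apply/negP => h; exact: (cc _ h (esym erE)).
have [j nzj] : exists j, (rE *m C) 0 j != 0.
  apply: NNPP => nx; move: nE; rewrite submxE => /negP; apply; apply/eqP/matrixP => i j.
  rewrite ord1 [RHS]mxE; case: (eqVneq ((rE *m C) 0 j) 0) => // h; exfalso; apply: nx; by exists j.
pose z := (rE *m C) 0 j.
pose lam y := (pre s y *m C) 0 j / z.
have kerX r : sg r = 0 -> (r <= X0)%MS.
  by move=> h; apply: cb; rewrite h; [apply: (V0 Hnu) | apply: J0].
have lam_sg r : lam (sg r) = (r *m C) 0 j / z.
  have : sg (pre s (sg r) - r) = 0 by rewrite sgB -preP ?subrr //; exists r.
  move/kerX; rewrite submxE mulmxBl subr_eq0 => /eqP.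
  by rewrite /lam => ->.
have lam0 r : (r <= X0)%MS -> lam (sg r) = 0.
  by rewrite lam_sg submxE => /eqP ->; rewrite mxE mul0r.
have lamL : forall k y y', Vp y -> Vp y' -> lam (k *: y + y') = k * lam y + lam y'.
  move=> k y y' /HV [r ->] /HV [r' ->].
  by rewrite -sgDZ !lam_sg mulmxDl -scalemxAl !mxE mulrDl mulrA.
exists lam; split => //.
- by rewrite erE lam_sg divff.
- by move=> y Vy Jy; have [r er] := HV Vy; rewrite er; apply: lam0; apply: cb; rewrite -er.
move=> w Vw lw.
pose L' y := exists r v, [/\ (r <= X0)%MS, Vp v & y = sg r + mul v w].
case: (classic (L' E)) => [[r [v [hr Vv eE]]]|nL].
  exists v; split => // u Vu.
  have [r' hr' er'] := cd _ hr u Vu.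
  have : u = sg r' + mul (mul u v) w.
    by rewrite er' -(mA Hnu) -(mDr Hnu) -eE (VrE Hnu EE Vu).
  move=> eu; rewrite [in RHS]eu -[sg r']scale1r (lamL _ _ _ (ca _ hr')); last by apply: (VM Hnu) => //; apply: (VM Hnu).
  by rewrite lam0 // mulr0 add0r.
exfalso.
have Q'0 : L' (sg 0).
  by exists 0, 0; split; [apply: sub0mx | apply: (V0 Hnu) | rewrite (m0l Hnu) addr0].
have Q'C : forall k r r', L' (sg r) -> L' (sg r') -> L' (sg (k *: r + r')).
  move=> k r r' [r1 [v1 [h1 V1 e1]]] [r2 [v2 [h2 V2 e2]]]; rewrite sgDZ e1 e2.
  exists (k *: r1 + r2), (k *: v1 + v2); split.
  - by apply: addmx_sub => //; apply: scalemx_sub.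
  - exact: (VDZ Hnu).
  rewrite (mDZl Hnu) sgDZ scalerDr.
  by rewrite -!addrA; congr (_ + _); rewrite addrCA.
have [Y HY] := subspace_repr Q'0 Q'C.
have cY : cand Y.
  split.
  - move=> r /HY [r0 [v [h0 V0' ->]]].
    by rewrite -[sg r0]scale1r; apply: (VDZ Hnu); [apply: ca | apply: (VM Hnu)].
  - move=> r Vr Jr; apply/HY; exists r, 0; split; last by rewrite (m0l Hnu) addr0.
    + exact: cb.
    + exact: (V0 Hnu).
  - by move=> r /HY h eq; apply: nL; rewrite -eq.
  move=> r /HY [r0 [v [h0 V0' er]]] u Vu.
  have Vsr : Vp (sg r) by rewrite er -[sg r0]scale1r; apply: (VDZ Hnu); [apply: ca | apply: (VM Hnu)].
  have [r' er'] := HV (VM Hnu Vu Vsr).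
  exists r' => //; apply/HY; rewrite -er'.
  have [r1 h1 e1] := cd _ h0 u Vu.
  exists r1, (mul u v); split => //; first exact: (VM Hnu).
  by rewrite er (mDr Hnu) e1 (mA Hnu).
have [rw erw] := HV Vw.
have rwY : (rw <= Y)%MS.
  apply/HY; rewrite -erw; exists 0, E; split.
  - exact: sub0mx.
  - exact: VE.
  by rewrite sg0 add0r (VlE Hnu EE Vw).
have nrw : ~~ (rw <= X0)%MS by apply/negP => h; apply: lw; rewrite erw lam0.
apply: (mx Y cY); apply: rank_ltmx; rewrite ltmxE; apply/andP; split.
  apply/row_subP => i; apply/HY; exists (row i X0), 0; split.
  - exact: row_sub.
  - exact: (V0 Hnu).
  by rewrite (m0l Hnu) addr0.
by apply/negP => h; move/negP: nrw; apply; exact: submx_trans rwY h.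
Qed.
End Lam.


Section MDef.
Variables (K : fieldType) (A : lmodType K) (mul : A -> A -> A) (E : A) (lam : A -> K).
Definition Gf (x : A) (a : A) : K := lam (mul (mul (mul E a) x) E).
Definition Mset (g : A -> K) : Prop :=
  exists xs : seq (K * A), g = fun a => \sum_(p <- xs) p.1 * Gf p.2 a.
Definition Mty := {g : A -> K | Mset g}.
HB.instance Definition _ := boolp.gen_eqMixin Mty.
HB.instance Definition _ := boolp.gen_choiceMixin Mty.

Lemma Meq (u v : Mty) : proj1_sig u = proj1_sig v -> u = v.
Proof.
case: u v => [g Hg] [h Hh] /= eq; subst h; congr exist; exact: proof_irrelevance.
Qed.

Lemma Mset0 : Mset (fun _ => 0).
Proof. by exists [::]; apply: functional_extensionality => a; rewrite big_nil. Qed.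
Lemma MsetD g h : Mset g -> Mset h -> Mset (fun a => g a + h a).
Proof.
move=> [xs ->] [ys ->]; exists (xs ++ ys).
by apply: functional_extensionality => a; rewrite big_cat.
Qed.
Lemma MsetZ k g : Mset g -> Mset (fun a => k * g a).
Proof.
move=> [xs ->]; exists [seq (k * p.1, p.2) | p <- xs].
apply: functional_extensionality => a; rewrite big_map mulr_sumr.
by apply: eq_bigr => p _; rewrite mulrA.
Qed.
Lemma MsetN g : Mset g -> Mset (fun a => - g a).
Proof.
move=> H; have := MsetZ (-1) H.
by have -> : (fun a => -1 * g a) = (fun a => - g a)
  by apply: functional_extensionality => a; rewrite mulN1r.
Qed.

Definition Mzero : Mty := exist _ _ Mset0.
Definition Madd (u v : Mty) : Mty := exist _ _ (MsetD (proj2_sig u) (proj2_sig v)).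
Definition Mopp (u : Mty) : Mty := exist _ _ (MsetN (proj2_sig u)).
Definition Mscale (k : K) (u : Mty) : Mty := exist _ _ (MsetZ k (proj2_sig u)).

Lemma MaddA : associative Madd.
Proof. by move=> u v w; apply: Meq; apply: functional_extensionality => a /=; rewrite addrA. Qed.
Lemma MaddC : commutative Madd.
Proof. by move=> u v; apply: Meq; apply: functional_extensionality => a /=; rewrite addrC. Qed.
Lemma Madd0 : left_id Mzero Madd.
Proof. by move=> u; apply: Meq; apply: functional_extensionality => a /=; rewrite add0r. Qed.
Lemma MaddN : left_inverse Mzero Mopp Madd.
Proof. by move=> u; apply: Meq; apply: functional_extensionality => a /=; rewrite addNr. Qed.
HB.instance Definition _ := GRing.isZmodule.Build Mty MaddA MaddC Madd0 MaddN.
Lemma MscaleA a b v : Mscale a (Mscale b v) = Mscale (a * b) v.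
Proof. by apply: Meq; apply: functional_extensionality => x /=; rewrite mulrA. Qed.
Lemma Mscale1 : left_id 1 Mscale.
Proof. by move=> u; apply: Meq; apply: functional_extensionality => x /=; rewrite mul1r. Qed.
Lemma MscaleDr : right_distributive Mscale +%R.
Proof. by move=> k u v; apply: Meq; apply: functional_extensionality => x /=; rewrite mulrDr. Qed.
Lemma MscaleDl v : {morph Mscale^~ v: a b / a + b}.
Proof. by move=> a b; apply: Meq; apply: functional_extensionality => x /=; rewrite mulrDl. Qed.
HB.instance Definition _ := GRing.Zmodule_isLmodule.Build K Mty MscaleA Mscale1 MscaleDr MscaleDl.

Lemma Mval0 : proj1_sig (0 : Mty) = fun _ => 0. Proof. by []. Qed.
Lemma MvalD (u v : Mty) : proj1_sig (u + v) = fun a => proj1_sig u a + proj1_sig v a. Proof. by []. Qed.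
Lemma MvalZ k (u : Mty) : proj1_sig (k *: u) = fun a => k * proj1_sig u a. Proof. by []. Qed.
End MDef.

Section Full.
Variables (K : fieldType) (A : lmodType K) (mul : A -> A -> A).
Hypothesis Hnu : is_nualg mul.
Local Notation mA := (mA Hnu).

Lemma fullness (I : Type) (E_ : I -> A) (e : A) :
  (forall i, Defs.idempotent mul (E_ i)) ->
  (forall i j, i <> j -> mul (E_ i) (E_ j) = 0) ->
  (forall i j, fin_dim (fun x : A => exists a, x = mul (mul (E_ i) a) (E_ j))) ->
  (forall a : A, exists s : seq (I * I * A),
          a = \sum_(t <- s) mul (mul (E_ t.1.1) t.2) (E_ t.1.2)) ->
  generating mul e -> forall i, Jsp mul e (E_ i).
Proof.
move=> Eid Eorth Efin Edec [eid Hgen] i.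
apply: NNPP => HE.
set E := E_ i.
have EE : mul E E = E by apply: Eid.
have [s Hs] := Efin i i.
have HV : forall y, Vp mul E y -> spanP s y.
  move=> y /Hs [c ->]; exists (\row_k c k); rewrite /sg.
  by apply: eq_bigr => k _; rewrite mxE.
have [lam [lamL lamE lamJ lamC]] := lam_exists Hnu EE HV HE.
have mXEE X : mul (mul X E) E = mul X E by rewrite -mA EE.
have lam0 : lam 0 = 0.
  have := lamL 1 0 0 (V0 Hnu E) (V0 Hnu E); rewrite scale1r addr0 mul1r => h.
  by apply: (addrI (lam 0)); rewrite addr0 -h.
have VG a x : Vp mul E (mul (mul (mul E a) x) E).
  by exists (mul a x); rewrite !mA.
have GfDZ x y k a : Gf mul E lam (k *: x + y) a = k * Gf mul E lam x a + Gf mul E lam y a.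
  by rewrite /Gf (mDZr Hnu) (mDZl Hnu) lamL.
have GfDZa x y k a : Gf mul E lam x (k *: a + y) = k * Gf mul E lam x a + Gf mul E lam x y.
  by rewrite /Gf (mDZr Hnu) !(mDZl Hnu) lamL.
have Mrepr g : Mset mul E lam g -> exists x, g = Gf mul E lam x.
  move=> [xs ->]; exists (\sum_(p <- xs) p.1 *: p.2).
  apply: functional_extensionality => a; elim: xs => [|p xs IH].
    by rewrite !big_nil /Gf (m0r Hnu) (m0l Hnu) lam0.
  by rewrite !big_cons GfDZ IH.
pose M := Mty mul E lam.
have Mact b g : Mset mul E lam g -> Mset mul E lam (fun a => g (mul a b)).
  move=> [xs ->]; exists [seq (p.1, mul b p.2) | p <- xs].
  apply: functional_extensionality => a; rewrite big_map; apply: eq_bigr => p _ /=.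
  by rewrite /Gf !mA.
pose act (b : A) (u : M) : M := exist _ _ (Mact b _ (proj2_sig u)).
have GE : Mset mul E lam (Gf mul E lam E).
  exists [:: (1, E)]; apply: functional_extensionality => a.
  by rewrite big_cons big_nil addr0 mul1r.
pose mE : M := exist _ _ GE.
have mE0 : mE != 0.
  apply/eqP => h; have := f_equal (fun u : M => proj1_sig u E) h.
  by rewrite /= /Gf EE EE EE lamE => /eqP; rewrite oner_eq0.
have actE u : act e u = 0.
  apply: Meq; apply: functional_extensionality => c /=.
  have [y ->] := Mrepr _ (proj2_sig u).
  rewrite /Gf; apply: lamJ.
    by exists (mul (mul c e) y); rewrite !mA.
  by have := Jprod mul e (mul E c) (mul y E); rewrite !mA.
have modM : is_module mul act.
  split.
  - by move=> a b u; apply: Meq; apply: functional_extensionality => c /=; rewrite mA.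
  - move=> k a b u; apply: Meq; apply: functional_extensionality => c /=.
    have [y ->] := Mrepr _ (proj2_sig u).
    by rewrite (mDZr Hnu) GfDZa.
  - by move=> k a u v; apply: Meq; apply: functional_extensionality => c.
have qcM : quasicoherent act.
  move=> u; have [y ey] := Mrepr _ (proj2_sig u).
  have [L HL] := local_units Hnu Eid Eorth Edec [:: y].
  have [h1 _] := HL y (or_introl erefl).
  exists (\sum_(l <- L) E_ l); apply: Meq; apply: functional_extensionality => c /=.
  by rewrite ey /Gf mA -(mA (mul E c)) h1.
have irrM : irreducible act.
  split; first by exists mE; apply/eqP.
  move=> P [P0 PC Pact].
  case: (classic (exists m, P m /\ m <> 0)) => [[m [Pm nm]]|nP]; last first.
    by left => m Pm; apply: NNPP => h; apply: nP; exists m.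
  right.
  have [x ex] := Mrepr _ (proj2_sig m).
  have [a na] : exists a, Gf mul E lam x a <> 0.
    apply: NNPP => h; apply: nm; apply: Meq; rewrite ex /=.
    apply: functional_extensionality => a; apply: NNPP => h'; apply: h; by exists a.
  have [v [[v' ev] Hv]] := lamC _ (VG a x) na.
  have PmE : P mE.
    have -> : mE = act (mul v a) m.
      apply: Meq; apply: functional_extensionality => c /=; rewrite ex.
      rewrite /Gf; have := Hv _ (VG c E) => <-.
      by rewrite ev !mA !mXEE.
    exact: Pact.
  move=> m'; have [y ey] := Mrepr _ (proj2_sig m').
  have -> : m' = act y mE.
    apply: Meq; apply: functional_extensionality => c /=; rewrite ey.
    by rewrite /Gf !mA mXEE.
  exact: Pact.
have [f [fL fact fsurj]] := Hgen M act modM qcM irrM.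
have [x [a' ->] fx] := fsurj mE.
have Ae_e : in_Ae mul e e by exists e.
have fe : f e = 0.
  by rewrite -{1}eid fact // actE.
move: mE0; rewrite -fx fact // fe.
have -> : act a' 0 = 0.
  by apply: Meq; apply: functional_extensionality => c.
by rewrite eqxx.
Qed.
End Full.


Lemma mem_In (T : eqType) (x : T) (s : seq T) : x \in s -> List.In x s.
Proof. by elim: s => [|y s IH] //=; rewrite in_cons => /orP [/eqP ->|/IH]; [left | right]. Qed.

Section Span.
Variables (K : fieldType) (A : lmodType K).
Lemma span0 (S : seq A) : spanP S 0.
Proof. by exists 0; rewrite sg0. Qed.
Lemma spanDZ (S : seq A) k x y : spanP S x -> spanP S y -> spanP S (k *: x + y).
Proof. by move=> [r ->] [r' ->]; exists (k *: r + r'); rewrite sgDZ. Qed.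
Lemma span_sum (S : seq A) (T : Type) (l : seq T) (P : pred T) (F : T -> A) :
  (forall t, P t -> spanP S (F t)) -> spanP S (\sum_(t <- l | P t) F t).
Proof.
move=> H; elim: l => [|t l IH]; first by rewrite big_nil; apply: span0.
rewrite big_cons; case: ifP => // Pt.
by rewrite -[F t]scale1r; apply: spanDZ => //; apply: H.
Qed.
Lemma span_sum_In (S : seq A) (T : Type) (l : seq T) (F : T -> A) :
  (forall t, List.In t l -> spanP S (F t)) -> spanP S (\sum_(t <- l) F t).
Proof.
elim: l => [|t l IH] H; first by rewrite big_nil; apply: span0.
rewrite big_cons -[F t]scale1r; apply: spanDZ; first by apply: H; left.
by apply: IH => t' h; apply: H; right.
Qed.
Lemma span_elem (S : seq A) x : List.In x S -> spanP S x.
Proof.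
move=> h.
have xS : x \in S by elim: S h => [|y S IH] //= [->|h]; rewrite in_cons ?eqxx // IH ?orbT.
have ix : (index x S < size S)%N by rewrite index_mem.
exists (delta_mx 0 (Ordinal ix)); rewrite /sg (bigD1 (Ordinal ix)) //= mxE !eqxx /= scale1r.
rewrite big1 ?addr0 ?nth_index // => k nk; rewrite mxE (negbTE nk) andbF scale0r //.
Qed.
Lemma span_mono (S S' : seq A) x : (forall y, List.In y S -> spanP S' y) ->
  spanP S x -> spanP S' x.
Proof.
move=> H [r ->]; apply: span_sum => k _.
rewrite -[_ *: _]addr0; apply: spanDZ; last exact: span0.
by apply: H; apply: mem_In; apply: mem_nth.
Qed.
End Span.

Section Main.
Variables (K : fieldType) (A : lmodType K) (mul : A -> A -> A) (e : A).
Hypothesis Hnu : is_nualg mul.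
Local Notation mA := (mA Hnu).
Local Notation in_Ae := (in_Ae mul e).
Local Notation End0 := (in_End0_Ae mul e).

Lemma End0_ext T T' : (forall x, in_Ae x -> T x = T' x) -> End0 T' -> End0 T.
Proof.
move=> H [n [phi [xi [h1 h2 h3]]]]; exists n, phi, xi; split => // x hx.
by rewrite H // h3.
Qed.
Lemma End0_zero : End0 (fun _ => 0).
Proof.
exists 0%N, (fun _ _ => 0), (fun _ => 0); split.
- case=> //.
- case=> //.
by move=> x _; rewrite big_ord0.
Qed.
Lemma End0_add T1 T2 : End0 T1 -> End0 T2 -> End0 (fun x => T1 x + T2 x).
Proof.
move=> [n1 [phi1 [xi1 [a1 b1 c1]]]] [n2 [phi2 [xi2 [a2 b2 c2]]]].
exists (n1 + n2)%N,
  (fun k => match split k with inl k1 => phi1 k1 | inr k2 => phi2 k2 end),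
  (fun k => match split k with inl k1 => xi1 k1 | inr k2 => xi2 k2 end); split.
- by move=> k; case: (split k).
- by move=> k; case: (split k).
move=> x hx; rewrite c1 // c2 // big_split_ord /=; congr (_ + _); apply: eq_bigr => k _.
  by have := unsplitK (inl k : 'I_n1 + 'I_n2) => /= ->.
by have := unsplitK (inr k : 'I_n1 + 'I_n2) => /= ->.
Qed.
Lemma End0_sum (T : Type) (l : seq T) (F : T -> A -> A) :
  (forall t, List.In t l -> End0 (F t)) -> End0 (fun x => \sum_(t <- l) F t x).
Proof.
elim: l => [|t l IH] H.
  by apply: (End0_ext _ End0_zero) => x _; rewrite big_nil.
apply: (End0_ext _ (End0_add (H t (or_introl erefl)) (IH (fun t' h => H t' (or_intror h))))).
by move=> x _; rewrite big_cons.
Qed.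
End Main.


Lemma In_foldr (T U : Type) (f : T -> seq U) (l : seq T) t x :
  List.In t l -> List.In x (f t) -> List.In x (foldr (fun t acc => f t ++ acc) [::] l).
Proof.
elim: l => [|t' l IH] //= [<-|h] hx; apply: In_cat; first by left.
by right; apply: IH.
Qed.

Theorem main_gen (K : fieldType) (A : lmodType K) (mul : A -> A -> A) (e : A) :
  is_nualg mul -> AUF mul -> generating mul e ->
  [/\ forall (k : K) a b x, in_Ae mul e x ->
        mul (k *: a + b) x = k *: mul a x + mul b x,
      forall a : A, in_End0_right_Ae mul e (mul a),
      forall a b : A, (forall x, in_Ae mul e x -> mul a x = mul b x) -> a = b
    & forall T : A -> A, in_End0_right_Ae mul e T ->
        exists a : A, forall x, in_Ae mul e x -> T x = mul a x].
Proof.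
move=> Hnu [I [E_ [Eid Eorth Efin Edec]]] Hg.
have mA := mA Hnu.
have eid : mul e e = e by case: Hg.
have full := fullness Hnu Eid Eorth Efin Edec Hg.
have AeE x : in_Ae mul e x -> mul x e = x by move=> [a ->]; rewrite -mA eid.
have AeM a x : in_Ae mul e x -> in_Ae mul e (mul a x) by move=> [b ->]; exists (mul a b); rewrite mA.
have AeDZ k x y : in_Ae mul e x -> in_Ae mul e y -> in_Ae mul e (k *: x + y).
  by move=> [a ->] [b ->]; exists (k *: a + b); rewrite (mDZl Hnu).
have JF L : Jsp mul e (\sum_(l <- L) E_ l).
  elim: L => [|l L IH]; first by rewrite big_nil; apply: J0.
  by rewrite big_cons -[E_ l]scale1r; apply: (JDZ Hnu).
have inj0 c : (forall x, in_Ae mul e x -> mul c x = 0) -> c = 0.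
  move=> Hc; have [L HL] := local_units Hnu Eid Eorth Edec [:: c].
  have [_ h] := HL c (or_introl erefl).
  have [ps eps] := JF L.
  rewrite -h eps (m_sumr Hnu) big1_seq // => p _.
  by rewrite mA Hc ?(m0l Hnu) //; exists p.1.
split.
- by move=> k a b x _; apply: (mDZl Hnu).
-
  move=> a; split; last by move=> xi c _ _; apply: mA.
  pose sfun j k := proj1_sig (constructive_indefinite_description _ (Efin j k)).
  have Hsf j k : forall x, (exists a, x = mul (mul (E_ j) a) (E_ k)) ->
      exists c : 'I_(size (sfun j k)) -> K, x = \sum_(i < size (sfun j k)) c i *: (sfun j k)`_i.
    exact: (proj2_sig (constructive_indefinite_description _ (Efin j k))).
  have [se ese] := Edec e.
  pose S j := foldr (fun t acc => [seq mul x (mul t.2 (E_ t.1.2)) | x <- sfun j t.1.1] ++ acc) [::] se.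
  have InS j t x : List.In t se -> List.In x (sfun j t.1.1) ->
      List.In (mul x (mul t.2 (E_ t.1.2))) (S j).
    move=> ht hx; apply: (In_foldr (f := fun t => [seq mul x (mul t.2 (E_ t.1.2)) | x <- sfun j t.1.1]) ht).
    exact: (In_map (fun x => mul x (mul t.2 (E_ t.1.2))) hx).
  have spanS j eta : in_Ae mul e eta -> spanP (S j) (mul (E_ j) eta).
    move=> [a' ->]; rewrite mA ese (m_sumr Hnu); apply: span_sum_In => t ht.
    have -> : mul (mul (E_ j) a') (mul (mul (E_ t.1.1) t.2) (E_ t.1.2)) =
              mul (mul (mul (E_ j) a') (E_ t.1.1)) (mul t.2 (E_ t.1.2)) by rewrite !mA.
    have [c ->] := Hsf j t.1.1 _ (ex_intro _ a' erefl).
    rewrite (m_suml Hnu); apply: span_sum => i _; rewrite (mZl Hnu).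
    rewrite -[_ *: _]addr0; apply: spanDZ; last exact: span0.
    by apply: span_elem; apply: InS => //; apply: mem_In; apply: mem_nth.
  have term i j b : in_End0_Ae mul e (mul (mul (mul (E_ i) b) (E_ j))).
    set y0 := mul (mul (E_ i) b) (E_ j).
    have [n [phi [zeta [phiL phirep]]]] := coords (S j).
    exists n, (fun k eta => phi k (mul (E_ j) eta)), (fun k => mul (mul y0 (zeta k)) e); split.
    - move=> k; split.
        move=> c x y hx hy; rewrite (mDZr Hnu) phiL //; exact: spanS.
      exists (E_ j); split; first exact: Eid.
      by move=> eta _; rewrite mA Eid.
    - by move=> k; exists (mul y0 (zeta k)).
    move=> eta heta.
    have y0E : mul y0 (E_ j) = y0 by rewrite /y0 -mA Eid.
    rewrite -{1}(AeE eta heta) mA -{1}y0E -(mA y0 (E_ j) eta).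
    rewrite {1}(phirep _ (spanS j eta heta)) (m_sumr Hnu) (m_suml Hnu).
    by apply: eq_bigr => k _; rewrite (mZr Hnu) (mZl Hnu).
  have [sa esa] := Edec a.
  apply: (End0_ext (T' := fun x => \sum_(t <- sa) mul (mul (mul (E_ t.1.1) t.2) (E_ t.1.2)) x)).
    by move=> x _; rewrite {1}esa (m_suml Hnu).
  by apply: End0_sum => t _; apply: term.
- move=> a b H; apply/eqP; rewrite -subr_eq0; apply/eqP; apply: inj0 => x hx.
  by rewrite (mBl Hnu) H // subrr.
move=> T [[n [phi [xi [Hphi Hxi HT]]]] Hcomm].
pose fk k := proj1_sig (constructive_indefinite_description _ (proj2 (Hphi k))).
have Hfk k : mul (fk k) (fk k) = fk k /\
    forall eta, in_Ae mul e eta -> phi k (mul (fk k) eta) = phi k eta.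
  exact: (proj2_sig (constructive_indefinite_description _ (proj2 (Hphi k)))).
have [L HL] := local_units Hnu Eid Eorth Edec [seq fk k | k <- enum 'I_n].
set F := \sum_(l <- L) E_ l in HL.
have [ps eps] := JF L.
exists (\sum_(p <- ps) mul (T (mul p.1 e)) (mul e p.2)) => eta heta.
have Ae0 : in_Ae mul e 0 by exists 0; rewrite (m0l Hnu).
have phi0 k : phi k 0 = 0.
  have := (proj1 (Hphi k)) 1 0 0 Ae0 Ae0.
  by rewrite scale1r addr0 mul1r => h; apply: (addrI (phi k 0)); rewrite addr0 -h.
have TL k x y : in_Ae mul e x -> in_Ae mul e y -> T (k *: x + y) = k *: T x + T y.
  move=> hx hy; rewrite (HT _ (AeDZ k x y hx hy)) (HT _ hx) (HT _ hy) scaler_sumr -big_split.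
  apply: eq_bigr => j _ /=.
  by rewrite (proj1 (Hphi j)) // scalerDl scalerA.
have T0 : T 0 = 0 by rewrite HT // big1 // => j _; rewrite phi0 scale0r.
have Tsum (l : seq (A * A)) (G : A * A -> A) : (forall p, in_Ae mul e (G p)) ->
    T (\sum_(p <- l) G p) = \sum_(p <- l) T (G p).
  move=> hG; elim: l => [|p l IH]; first by rewrite !big_nil.
  rewrite !big_cons -[G p]scale1r TL // ?scale1r ?IH //.
  elim: l {IH} => [|q l IH]; first by rewrite big_nil.
  by rewrite big_cons -[G q]scale1r; apply: AeDZ.
have TF : T eta = T (mul F eta).
  rewrite !HT //; last exact: AeM.
  apply: eq_bigr => k _; congr (_ *: _).
  have [_ hk] := Hfk k.
  have hF : mul (fk k) F = fk k.
    apply: (proj2 (HL (fk k) _)); apply: In_map; apply: mem_In; by rewrite mem_enum.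
  by rewrite -(hk _ heta) -(hk _ (AeM F eta heta)) mA hF.
rewrite TF /F eps (m_suml Hnu) Tsum; last first.
  by move=> p; rewrite -(AeE eta heta) mA; exists (mul (mul (mul p.1 e) p.2) eta).
rewrite (m_suml Hnu); apply: eq_bigr => p _.
have hc : exists b, mul (mul e p.2) eta = mul (mul e b) e.
  by exists (mul p.2 eta); rewrite -!mA (AeE eta heta).
rewrite -[RHS]mA -(Hcomm _ _ (ex_intro _ p.1 erefl) hc).
by congr (T _); rewrite !mA -(mA _ e e) eid.
Qed.

Theorem lemma11p6 (R : realType) (A : lmodType R[i]) (mul : A -> A -> A) (e : A) :
  is_nualg mul -> AUF mul -> generating mul e ->
  [/\ forall (k : R[i]) a b x, in_Ae mul e x ->
        mul (k *: a + b) x = k *: mul a x + mul b x,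
      forall a : A, in_End0_right_Ae mul e (mul a),
      forall a b : A, (forall x, in_Ae mul e x -> mul a x = mul b x) -> a = b
    & forall T : A -> A, in_End0_right_Ae mul e T ->
        exists a : A, forall x, in_Ae mul e x -> T x = mul a x].
Proof. exact: main_gen. Qed.
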